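(* Let $\kappa$ be an infinite cardinal and let $X$ be a crowded Hausdorff Baire space which is $\omega_1$-expandable and satisfies $dis^*(X)\leq\kappa$. If $A\subseteq X$ and $|A|\leq\kappa$, then $|\overline{A}|\leq\kappa$.
   Context: All spaces are Hausdorff. A space is crowded if it has no isolated points. $dis^*(X)$ is the least number of closed discrete subsets needed to cover $X$. For a collection $\mathcal{G}$ of subsets of $X$, $ord(x,\mathcal{G})=|\{G\in\mathcal{G}:x\in G\}|$. For a cardinal $\lambda$, $X$ is $\lambda$-expandable if for every closed discrete set $D\subseteq X$ there is a family $\mathcal{G}=\{U_d: d\in D\}$ of open sets with $U_d\cap D=\{d\}$ for each $d\in D$ and $ord(x,\mathcal{G})\leq\lambda$ for every $x\in X$. *)

(* Defs.v *)
From Stdlib Require Import Classical.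

Set Implicit Arguments.

Record topology (X : Type) := Topology {
  open : (X -> Prop) -> Prop;
  open_full : open (fun _ => True);
  open_inter : forall U V, open U -> open V -> open (fun x => U x /\ V x);
  open_union : forall (F : (X -> Prop) -> Prop),
      (forall U, F U -> open U) -> open (fun x => exists U, F U /\ U x)
}.

Section Topo.
Variables (X : Type) (T : topology X).

Definition closed (C : X -> Prop) : Prop := open T (fun x => ~ C x).

Definition closure (A : X -> Prop) : X -> Prop :=
  fun x => forall U, open T U -> U x -> exists y, U y /\ A y.

Definition hausdorff : Prop :=
  forall x y, x <> y -> exists U V, open T U /\ open T V /\ U x /\ V y /\
    (forall z, ~ (U z /\ V z)).

Definition isolated (x : X) : Prop := open T (fun y => y = x).
Definition crowded : Prop := forall x, ~ isolated x.

Definition dense (D : X -> Prop) : Prop :=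
  forall U, open T U -> (exists x, U x) -> exists y, U y /\ D y.

Definition baire : Prop :=
  forall G : nat -> X -> Prop,
    (forall n, open T (G n)) -> (forall n, dense (G n)) ->
    dense (fun x => forall n, G n x).

Definition discrete (D : X -> Prop) : Prop :=
  forall x, D x -> exists U, open T U /\ (forall y, (U y /\ D y) <-> y = x).

Definition closed_discrete (D : X -> Prop) : Prop := closed D /\ discrete D.
End Topo.

Definition card_le (X : Type) (S : X -> Prop) (K : Type) : Prop :=
  exists f : X -> K, forall x y, S x -> S y -> f x = f y -> x = y.

Definition infinite_type (K : Type) : Prop :=
  exists f : nat -> K, forall m n, f m = f n -> m = n.

Definition countable_set (X : Type) (S : X -> Prop) : Prop := card_le S nat.

(* |S| <= aleph_1 : S carries a well-order all of whose proper initial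
   segments are countable (i.e. S has order type <= omega_1). *)
Definition le_aleph1 (X : Type) (S : X -> Prop) : Prop :=
  exists R : X -> X -> Prop,
    (forall x, S x -> ~ R x x) /\
    (forall x y z, S x -> S y -> S z -> R x y -> R y z -> R x z) /\
    (forall x y, S x -> S y -> R x y \/ x = y \/ R y x) /\
    (forall P : X -> Prop, (forall x, P x -> S x) -> (exists x, P x) ->
        exists m, P m /\ forall y, P y -> ~ R y m) /\
    (forall s, S s -> countable_set (fun t => S t /\ R t s)).

Definition dis_star_le (X : Type) (T : topology X) (K : Type) : Prop :=
  exists C : K -> X -> Prop,
    (forall k, closed_discrete T (C k)) /\ (forall x, exists k, C k x).

Definition omega1_expandable (X : Type) (T : topology X) : Prop :=
  forall D : X -> Prop, closed_discrete T D ->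
    exists U : X -> X -> Prop,
      (forall d, D d -> open T (U d) /\ (forall y, (U d y /\ D y) <-> y = d)) /\
      (forall x, le_aleph1 (fun d => D d /\ U d x)).

(* Main.v *)
Require Import Defs.
From Stdlib Require Import Classical ClassicalEpsilon FunctionalExtensionality PropExtensionality Cantor.

Definition incl {Y} (M N : Y -> Prop) := forall y, M y -> N y.
Definition chain {Y} (C : (Y -> Prop) -> Prop) :=
  forall M N, C M -> C N -> incl M N \/ incl N M.
Definition Union {Y} (C : (Y -> Prop) -> Prop) : Y -> Prop :=
  fun y => exists M, C M /\ M y.

Lemma set_ext {Y} (M N : Y -> Prop) : incl M N -> incl N M -> M = N.
Proof.
  intros H1 H2; apply functional_extensionality; intro y;
  apply propositional_extensionality; split; auto.
Qed.

Lemma choose_fun {A B} (P : A -> B -> Prop) :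
  (forall a, exists b, P a b) -> exists f : A -> B, forall a, P a (f a).
Proof.
  intro H. exists (fun a => proj1_sig (constructive_indefinite_description _ (H a))).
  intro a. exact (proj2_sig (constructive_indefinite_description _ (H a))).
Qed.

Section Zorn.
Variables (Y : Type) (F : (Y -> Prop) -> Prop) (b : Y -> Prop).
Hypothesis Fb : F b.
Hypothesis Fch : forall C, (forall M, C M -> F M) -> (exists M, C M) -> chain C -> F (Union C).
Hypothesis nomax : forall M, F M -> exists M', F M' /\ incl M M' /\ ~ incl M' M.

Definition nxt (M : Y -> Prop) : Y -> Prop :=
  match excluded_middle_informative (F M) with
  | left H => proj1_sig (constructive_indefinite_description _ (nomax M H))
  | right _ => M end.

Lemma nxt_spec M : F M -> F (nxt M) /\ incl M (nxt M) /\ ~ incl (nxt M) M.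
Proof.
  intro H. unfold nxt. destruct (excluded_middle_informative (F M)) as [H'|H'].
  - exact (proj2_sig (constructive_indefinite_description _ (nomax M H'))).
  - contradiction.
Qed.

Inductive tw : (Y -> Prop) -> Prop :=
| tw_b : tw b
| tw_n M : tw M -> tw (nxt M)
| tw_u C : (forall M, C M -> tw M) -> (exists M, C M) -> chain C -> tw (Union C).

Lemma tw_F M : tw M -> F M.
Proof.
  induction 1.
  - exact Fb.
  - apply nxt_spec; auto.
  - apply Fch; auto.
Qed.

Lemma tw_b_incl M : tw M -> incl b M.
Proof.
  induction 1; intros y Hy.
  - exact Hy.
  - apply (proj1 (proj2 (nxt_spec _ (tw_F _ H)))); auto.
  - destruct H1 as [M HM]. exists M; split; auto. apply H0; auto.
Qed.

Definition E (c : Y -> Prop) := forall y, tw y -> incl y c -> ~ incl c y -> incl (nxt y) c.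

Lemma lem1 c : tw c -> E c -> forall y, tw y -> incl y c \/ incl (nxt c) y.
Proof.
  intros Hc Ec y Hy. induction Hy.
  - left. apply tw_b_incl; auto.
  - destruct IHHy as [H|H].
    + destruct (classic (incl c M)) as [H'|H'].
      * right. rewrite (set_ext _ _ H H'). intros z Hz; exact Hz.
      * left. apply Ec; auto.
    + right. intros z Hz. apply (proj1 (proj2 (nxt_spec _ (tw_F _ Hy)))). auto.
  - destruct (classic (forall M, C M -> incl M c)) as [Hall|Hn].
    + left. intros z [M [HM Hz]]. exact (Hall M HM z Hz).
    + right. apply not_all_ex_not in Hn. destruct Hn as [M HM].
      apply imply_to_and in HM. destruct HM as [HM HM'].
      destruct (H0 M HM) as [H3|H3]; [contradiction|].
      intros z Hz. exists M; split; auto.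
Qed.

Lemma lem2 c : tw c -> E c.
Proof.
  induction 1.
  - intros y Hy H1 H2. exfalso. apply H2. apply tw_b_incl; auto.
  - intros y Hy H1 H2. destruct (lem1 M H IHtw y Hy) as [H3|H3].
    + destruct (classic (incl M y)) as [H4|H4].
      * rewrite (set_ext _ _ H3 H4). intros z Hz; exact Hz.
      * intros z Hz. apply (proj1 (proj2 (nxt_spec _ (tw_F _ H)))). exact (IHtw y Hy H3 H4 z Hz).
    + contradiction.
  - intros y Hy H3 H4.
    assert (exists u, Union C u /\ ~ y u) as [u [[M' [HM' Hu]] Hnu]].
    { apply NNPP; intro Hn; apply H4. intros u Hu. apply NNPP; intro Hn'. apply Hn; eauto. }
    destruct (lem1 M' (H M' HM') (H0 M' HM') y Hy) as [H5|H5].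
    + intros z Hz. exists M'. split; auto. apply (H0 M' HM' y Hy H5); [intro H6; apply Hnu; auto | exact Hz].
    + exfalso. apply Hnu. apply H5. apply (proj1 (proj2 (nxt_spec _ (tw_F _ (H M' HM'))))). auto.
Qed.

Lemma tw_chain : chain tw.
Proof.
  intros M N HM HN. destruct (lem1 M HM (lem2 M HM) N HN) as [H|H]; [right; auto|left].
  intros z Hz. apply H. apply (proj1 (proj2 (nxt_spec _ (tw_F _ HM)))). auto.
Qed.

Lemma zorn_false : False.
Proof.
  assert (HU : tw (Union tw)) by (apply tw_u; [auto | exists b; constructor | apply tw_chain]).
  destruct (nxt_spec _ (tw_F _ HU)) as [_ [_ H]]. apply H.
  intros z Hz. exists (nxt (Union tw)). split; auto. constructor; auto.
Qed.
End Zorn.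

Lemma zorn (Y : Type) (F : (Y -> Prop) -> Prop) (b : Y -> Prop) :
  F b ->
  (forall C, (forall M, C M -> F M) -> (exists M, C M) -> chain C -> F (Union C)) ->
  exists M, F M /\ forall M', F M' -> incl M M' -> incl M' M.
Proof.
  intros Fb Fch. apply NNPP; intro Hn.
  apply (zorn_false Y F b Fb Fch).
  intros M HM. apply NNPP; intro Hn2. apply Hn. exists M. split; auto.
  intros M' HM' Hi. apply NNPP; intro H3. apply Hn2. eauto.
Qed.

Definition inj_on {A B} (S : A -> Prop) (f : A -> B) :=
  forall x y, S x -> S y -> f x = f y -> x = y.

Lemma compar {A B} (a0 : A) (b0 : B) (P : A -> Prop) (Q : B -> Prop) :
  (exists f : A -> B, (forall a, P a -> Q (f a)) /\ inj_on P f) \/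
  (exists g : B -> A, (forall b, Q b -> P (g b)) /\ inj_on Q g).
Proof.
  set (F := fun R : A * B -> Prop =>
     (forall a b, R (a,b) -> P a /\ Q b) /\
     (forall a b b', R (a,b) -> R (a,b') -> b = b') /\
     (forall a a' b, R (a,b) -> R (a',b) -> a = a')).
  destruct (zorn (A*B) F (fun _ => False)) as [R [[HR1 [HR2 HR3]] Hmax]].
  - split; [|split]; intros; contradiction.
  - intros C HC _ Hch. split; [|split].
    + intros a b [M [HM H]]. apply (proj1 (HC M HM)); auto.
    + intros a b b' [M [HM H]] [N [HN H']].
      destruct (Hch M N HM HN) as [I|I].
      * apply (proj1 (proj2 (HC N HN)) a); auto.
      * apply (proj1 (proj2 (HC M HM)) a); auto.
    + intros a a' b [M [HM H]] [N [HN H']].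
      destruct (Hch M N HM HN) as [I|I].
      * apply (proj2 (proj2 (HC N HN)) a a' b); auto.
      * apply (proj2 (proj2 (HC M HM)) a a' b); auto.
  - destruct (classic (forall a, P a -> exists b, R (a,b))) as [Hall|Hn].
    + left. destruct (choose_fun (fun a b => P a -> R (a,b))) as [f Hf].
      { intro a. destruct (classic (P a)) as [Ha|Ha].
        - destruct (Hall a Ha) as [b Hb]; eauto.
        - exists b0; intro; contradiction. }
      exists f. split.
      * intros a Ha. apply (HR1 a (f a) (Hf a Ha)).
      * intros x y Hx Hy E. apply (HR3 x y (f x)); auto. rewrite E; auto.
    + apply not_all_ex_not in Hn. destruct Hn as [a1 Ha1].
      apply imply_to_and in Ha1. destruct Ha1 as [Pa1 Na1].
      destruct (classic (forall b, Q b -> exists a, R (a,b))) as [Hall|Hn].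
      * right. destruct (choose_fun (fun b a => Q b -> R (a,b))) as [g Hg].
        { intro b. destruct (classic (Q b)) as [Hb|Hb].
          - destruct (Hall b Hb) as [a Ha]; eauto.
          - exists a0; intro; contradiction. }
        exists g. split.
        -- intros b Hb. apply (HR1 (g b) b (Hg b Hb)).
        -- intros x y Hx Hy E. apply (HR2 (g x)); auto. rewrite E; auto.
      * exfalso. apply not_all_ex_not in Hn. destruct Hn as [b1 Hb1].
        apply imply_to_and in Hb1. destruct Hb1 as [Qb1 Nb1].
        assert (HF : F (fun p => R p \/ p = (a1,b1))).
        { split; [|split].
          - intros a b [H|H]; [auto|]. injection H; intros; subst; auto.
          - intros a b b' [H|H] [H'|H'].
            + eauto.
            + injection H'; intros; subst. exfalso; apply Na1; eauto.
            + injection H; intros; subst. exfalso; apply Na1; eauto.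
            + inversion H; inversion H'; subst; auto.
          - intros a a' b [H|H] [H'|H'].
            + eauto.
            + injection H'; intros; subst. exfalso; apply Nb1; eauto.
            + injection H; intros; subst. exfalso; apply Nb1; eauto.
            + inversion H; inversion H'; subst; auto. }
        specialize (Hmax _ HF (fun p H => or_introl H) (a1,b1) (or_intror eq_refl)).
        apply Na1; eauto.
Qed.

Section Sq.
Variables (K : Type) (e : nat -> K).
Hypothesis He : forall m n, e m = e n -> m = n.

Definition Yt := ((K * K * K) + K)%type.
Definition Sf (M : Yt -> Prop) k := M (inr k).
Definition Gf (M : Yt -> Prop) x y z := M (inl (x,y,z)).

Definition valid (M : Yt -> Prop) :=
  (forall x y z, Gf M x y z -> Sf M x /\ Sf M y /\ Sf M z) /\
  (forall x y, Sf M x -> Sf M y -> exists z, Gf M x y z) /\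
  (forall x y z z', Gf M x y z -> Gf M x y z' -> z = z') /\
  (forall x y z x' y', Gf M x y z -> Gf M x' y' z -> x = x' /\ y = y').

Definition M0 : Yt -> Prop := fun t => match t with
  | inr k => exists m, k = e m
  | inl (x,y,z) => exists m n, x = e m /\ y = e n /\ z = e (to_nat (m,n)) end.

Lemma to_nat_inj m n m' n' : to_nat (m,n) = to_nat (m',n') -> m = m' /\ n = n'.
Proof.
  intro H. assert (H' := f_equal of_nat H). rewrite !cancel_of_to in H'.
  injection H'; auto.
Qed.

Lemma M0_valid : valid M0.
Proof.
  split; [|split; [|split]]; unfold Gf, Sf; simpl.
  - intros x y z [m [n [-> [-> ->]]]]. split; [|split]; eexists; reflexivity.
  - intros x y [m ->] [n ->]. exists (e (to_nat (m,n))). exists m, n; auto.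
  - intros x y z z' [m [n [-> [-> ->]]]] [m' [n' [E1 [E2 ->]]]].
    apply He in E1; apply He in E2; subst; auto.
  - intros x y z x' y' [m [n [-> [-> ->]]]] [m' [n' [-> [-> E]]]].
    apply He in E. apply to_nat_inj in E. destruct E; subst; auto.
Qed.

Definition FF M := valid M /\ incl M0 M.

Lemma FF_chain : forall C, (forall M, C M -> FF M) -> (exists M, C M) -> chain C -> FF (Union C).
Proof.
  intros C HC [M1 HM1] Hch. split; [split; [|split; [|split]]|].
  - intros x y z [M [HM H]]. destruct (proj1 (proj1 (HC M HM)) x y z H) as [? [? ?]].
    unfold Sf; split; [|split]; exists M; auto.
  - intros x y [M [HM H]] [N [HN H']].
    destruct (Hch M N HM HN) as [I|I].
    + destruct (proj1 (proj2 (proj1 (HC N HN))) x y (I _ H) H') as [z Hz].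
      exists z, N; auto.
    + destruct (proj1 (proj2 (proj1 (HC M HM))) x y H (I _ H')) as [z Hz].
      exists z, M; auto.
  - intros x y z z' [M [HM H]] [N [HN H']].
    destruct (Hch M N HM HN) as [I|I].
    + apply (proj1 (proj2 (proj2 (proj1 (HC N HN)))) x y); auto. apply (I _ H).
    + apply (proj1 (proj2 (proj2 (proj1 (HC M HM)))) x y); auto. apply (I _ H').
  - intros x y z x' y' [M [HM H]] [N [HN H']].
    destruct (Hch M N HM HN) as [I|I].
    + apply (proj2 (proj2 (proj2 (proj1 (HC N HN)))) x y z); auto. apply (I _ H).
    + apply (proj2 (proj2 (proj2 (proj1 (HC M HM)))) x y z); auto. apply (I _ H').
  - intros t Ht. exists M1. split; auto. apply (proj2 (HC M1 HM1)); auto.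
Qed.

Lemma sq : exists pk : K -> K -> K, forall a b c d, pk a b = pk c d -> a = c /\ b = d.
Proof.
  destruct (zorn Yt FF M0) as [M [[[V1 [V2 [V3 V4]]] HM0] Hmax]].
  - split; [apply M0_valid | intros t H; exact H].
  - exact FF_chain.
  - set (S := Sf M).
    assert (Se : forall n, S (e n)) by (intro n; apply (HM0 (inr (e n))); simpl; eauto).
    destruct (choose_fun (fun (p : K * K) z => S (fst p) -> S (snd p) -> Gf M (fst p) (snd p) z))
      as [g0 Hg0].
    { intros [x y]. destruct (classic (S x /\ S y)) as [[Hx Hy]|Hn].
      - destruct (V2 x y Hx Hy) as [z Hz]; eauto.
      - exists (e 0). simpl; intros; exfalso; auto. }
    set (g := fun x y => g0 (x,y)).
    assert (Hg : forall x y, S x -> S y -> Gf M x y (g x y)) by (intros; apply (Hg0 (x,y)); auto).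
    assert (HgS : forall x y, S x -> S y -> S (g x y)) by
      (intros x y Hx Hy; apply (V1 _ _ _ (Hg x y Hx Hy))).
    assert (Hgi : forall x y x' y', S x -> S y -> S x' -> S y' -> g x y = g x' y' -> x = x' /\ y = y').
    { intros x y x' y' Hx Hy Hx' Hy' E. apply (V4 x y (g x y)); auto. rewrite E; auto. }
    assert (E01 : e 0 <> e 1) by (intro H; apply He in H; discriminate).
    assert (E02 : e 0 <> e 2) by (intro H; apply He in H; discriminate).
    assert (E12 : e 1 <> e 2) by (intro H; apply He in H; discriminate).
    assert (Hj : exists j : K -> K, (forall x, S (j x)) /\ forall x y, j x = j y -> x = y).
    { destruct (compar (e 0) (e 0) (fun k => ~ S k) S) as [[i [Hi1 Hi2]]|[h [Hh1 Hh2]]].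
      - exists (fun x => if excluded_middle_informative (S x) then g (e 0) x else g (e 1) (i x)).
        split.
        + intro x. destruct (excluded_middle_informative (S x)); auto.
        + intros x y. destruct (excluded_middle_informative (S x)) as [Hx|Hx];
            destruct (excluded_middle_informative (S y)) as [Hy|Hy]; intro E.
          * apply Hgi in E; intuition.
          * apply Hgi in E; auto; destruct E; exfalso; congruence.
          * apply Hgi in E; auto; destruct E; exfalso; congruence.
          * apply Hgi in E; auto. destruct E as [_ E]. apply Hi2; auto.
      - exfalso.
        set (S' := fun k => S k \/ exists s, S s /\ h s = k).
        destruct (choose_fun (fun x s => S' x -> ~ S x -> S s /\ h s = x)) as [r Hr].
        { intro x. destruct (classic (exists s, S s /\ h s = x)) as [[s Hs]|Hn].
          - exists s; auto.
          - exists x. intros [H|H] H'; contradiction. }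
        set (rt := fun x => if excluded_middle_informative (S x) then x else r x).
        set (code := fun x y => if excluded_middle_informative (S x) then e 0 else
                                if excluded_middle_informative (S y) then e 1 else e 2).
        set (nz := fun x y => h (g (code x y) (g (rt x) (rt y)))).
        assert (Hrt : forall x, S' x -> S (rt x)).
        { intros x Hx. unfold rt. destruct (excluded_middle_informative (S x)); auto.
          apply Hr; auto. }
        assert (Hcode : forall x y, S (code x y)).
        { intros x y; unfold code. destruct (excluded_middle_informative (S x)); auto.
          destruct (excluded_middle_informative (S y)); auto. }
        assert (Hnz : forall x y, S' x -> S' y -> S (g (code x y) (g (rt x) (rt y)))).
        { intros; apply HgS; auto. }
        set (M' := fun t : Yt => match t with
          | inr k => S' k
          | inl (x,y,z) => Gf M x y z \/ (S' x /\ S' y /\ ~ (S x /\ S y) /\ z = nz x y) end).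
        assert (Hsub : incl M M').
        { intros [[[x y] z]|k] H; simpl; [left; exact H | left; exact H]. }
        assert (HFF : FF M').
        { split; [split; [|split; [|split]]|].
          - unfold Gf, Sf; simpl. intros x y z [H|[H1 [H2 [H3 H4]]]].
            + destruct (V1 x y z H) as [? [? ?]]. unfold S'; auto.
            + split; [|split]; auto. right. exists (g (code x y) (g (rt x) (rt y))).
              split; auto.
          - unfold Gf, Sf; simpl. intros x y Hx Hy.
            destruct (classic (S x /\ S y)) as [[Hx' Hy']|Hn].
            + destruct (V2 x y Hx' Hy') as [z Hz]. eauto.
            + exists (nz x y). right. auto.
          - unfold Gf, Sf; simpl. intros x y z z' [H|[H1 [H2 [H3 H4]]]] [H'|[H1' [H2' [H3' H4']]]].
            + eauto.
            + exfalso. destruct (V1 x y z H) as [? [? ?]]. auto.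
            + exfalso. destruct (V1 x y z' H') as [? [? ?]]. auto.
            + congruence.
          - unfold Gf, Sf; simpl. intros x y z x' y' [H|[H1 [H2 [H3 H4]]]] [H'|[H1' [H2' [H3' H4']]]].
            + eauto.
            + exfalso. destruct (V1 x y z H) as [? [? Hz]]. subst z.
              apply (Hh1 _ (Hnz x' y' H1' H2')); auto.
            + exfalso. destruct (V1 x' y' z H') as [? [? Hz]]. subst z.
              apply (Hh1 _ (Hnz x y H1 H2)); auto.
            + rewrite H4 in H4'. unfold nz in H4'.
              apply Hh2 in H4'; try apply Hnz; auto.
              apply Hgi in H4'; auto. destruct H4' as [Ec E'].
              apply Hgi in E'; auto. destruct E' as [Ex Ey].
              assert (HSx : (S x <-> S x') /\ (S y <-> S y')).
              { unfold code in Ec.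
                destruct (excluded_middle_informative (S x)) as [a|a];
                destruct (excluded_middle_informative (S x')) as [a'|a'];
                destruct (excluded_middle_informative (S y)) as [c|c];
                destruct (excluded_middle_informative (S y')) as [c'|c'];
                  try (exfalso; tauto); try (exfalso; congruence); tauto. }
              assert (Hback : forall u u', S' u -> S' u' -> (S u <-> S u') -> rt u = rt u' -> u = u').
              { intros u u' Hu Hu' Hiff Er. unfold rt in Er.
                destruct (excluded_middle_informative (S u)) as [a|a];
                destruct (excluded_middle_informative (S u')) as [a'|a']; try tauto.
                destruct (Hr u Hu a) as [_ E1]. destruct (Hr u' Hu' a') as [_ E2].
                rewrite <- E1, <- E2, Er. auto. }
              split; apply Hback; tauto.
          - intros t Ht. apply Hsub. apply HM0; auto. }
        specialize (Hmax M' HFF Hsub (inr (h (e 0)))).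
        assert (HS' : S (h (e 0))).
        { apply Hmax. simpl. right. exists (e 0); auto. }
        apply (Hh1 (e 0)); auto. }
    destruct Hj as [j [Hj1 Hj2]].
    exists (fun x y => g (j x) (j y)). intros a b c d E.
    apply Hgi in E; auto. destruct E; split; auto.
Qed.
End Sq.

Lemma aleph1_inj (X K : Type) (x0 : X) (e : nat -> K)
  (pk : K -> K -> K) (Hpk : forall a b c d, pk a b = pk c d -> a = c /\ b = d)
  (He : forall m n, e m = e n -> m = n)
  (unc : ~ card_le (fun _ : K => True) nat) (F : X -> Prop) :
  le_aleph1 F -> exists f : X -> K, inj_on F f.
Proof.
  intros [R [_ [_ [Htri [_ Hcnt]]]]].
  destruct (compar x0 (e 0) F (fun _ => True)) as [[f [_ Hf]]|[j [Hj1 Hj2]]].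
  - exists f; exact Hf.
  - assert (Hk : forall f, F f -> exists k, f = j k \/ R f (j k)).
    { intros f Hf. apply NNPP; intro Hn. apply unc.
      assert (Hb : forall k, R (j k) f).
      { intro k. destruct (Htri (j k) f (Hj1 k I) Hf) as [H|[H|H]]; auto;
          exfalso; apply Hn; exists k; auto. }
      destruct (Hcnt f Hf) as [c Hc]. exists (fun k => c (j k)).
      intros x y _ _ E. apply Hj2; auto. }
    destruct (choose_fun (fun f k => F f -> f = j k \/ R f (j k))) as [kf Hkf].
    { intro f. destruct (classic (F f)) as [Hf|Hf].
      - destruct (Hk f Hf) as [k Hk']; eauto.
      - exists (e 0); intro; contradiction. }
    destruct (choose_fun (fun s (c : X -> nat) => F s -> inj_on (fun t => F t /\ R t s) c))
      as [cs Hcs].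
    { intro s. destruct (classic (F s)) as [Hs|Hs].
      - destruct (Hcnt s Hs) as [c Hc]. exists c; intros _; exact Hc.
      - exists (fun _ => 0); intro; contradiction. }
    exists (fun f => pk (kf f) (e (if excluded_middle_informative (f = j (kf f)) then 0
                                    else S (cs (j (kf f)) f)))).
    intros f f' Hf Hf' E. apply Hpk in E. destruct E as [Ek E].
    apply He in E. rewrite <- Ek in E.
    destruct (excluded_middle_informative (f = j (kf f))) as [a|a];
    destruct (excluded_middle_informative (f' = j (kf f))) as [a'|a']; try discriminate.
    + congruence.
    + injection E; intro E'.
      destruct (Hkf f Hf) as [H|H]; [contradiction|].
      destruct (Hkf f' Hf') as [H'|H']; [rewrite <- Ek in H'; contradiction|].
      rewrite <- Ek in H'.
      apply (Hcs (j (kf f)) (Hj1 _ I)); auto.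
Qed.

Section Topo.
Variables (X : Type) (T : topology X).

Lemma open_ext (P Q : X -> Prop) : open T P -> (forall x, P x <-> Q x) -> open T Q.
Proof.
  intros H E. replace Q with P; auto. apply set_ext; intros x; apply E.
Qed.

Lemma compl_dense (D : X -> Prop) : crowded T -> closed_discrete T D -> dense T (fun x => ~ D x).
Proof.
  intros Hc [Hcl Hd] U HU [x Hx]. apply NNPP; intro Hn.
  assert (HUD : forall y, U y -> D y).
  { intros y Hy. apply NNPP; intro H; apply Hn; eauto. }
  destruct (Hd x (HUD x Hx)) as [V [HV HVx]].
  apply (Hc x). unfold isolated.
  apply (open_ext (fun y => U y /\ V y)); [apply open_inter; auto|].
  intro y; split.
  - intros [H1 H2]. apply HVx; auto.
  - intros ->. split; auto. apply (proj2 (HVx x)); auto.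
Qed.

Lemma uncount (K : Type) (x0 : X) (Hc : crowded T) (Hb : baire T) (Hdis : dis_star_le T K) :
  ~ card_le (fun _ : K => True) nat.
Proof.
  intros [j Hj]. destruct Hdis as [C [HC Hcov]].
  set (G := fun n x => forall k, j k = n -> ~ C k x).
  assert (HG : forall n, open T (G n) /\ dense T (G n)).
  { intro n. destruct (classic (exists k, j k = n)) as [[k0 Hk0]|Hn].
    - assert (E : forall x, ~ C k0 x <-> G n x).
      { intro x; split.
        - intros H k Hk. assert (k = k0) by (apply Hj; auto; congruence). subst; auto.
        - intro H. apply H; auto. }
      split.
      + apply (open_ext _ _ (proj1 (HC k0)) E).
      + intros U HU HUn. destruct (compl_dense _ Hc (HC k0) U HU HUn) as [y [Hy1 Hy2]].
        exists y; split; auto. apply E; auto.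
    - assert (E : forall x, True <-> G n x).
      { intro x; split; auto. intros _ k Hk. exfalso; apply Hn; eauto. }
      split.
      + apply (open_ext _ _ (open_full T) E).
      + intros U HU [y Hy]. exists y; split; auto. apply E; auto. }
  destruct (Hb G (fun n => proj1 (HG n)) (fun n => proj2 (HG n)) (fun _ => True) (open_full T))
    as [y [_ Hy]]; [exists x0; auto|].
  destruct (Hcov y) as [k Hk]. apply (Hy (j k) k eq_refl Hk).
Qed.

Lemma closure_compl_open (A : X -> Prop) : open T (fun x => ~ closure T A x).
Proof.
  apply (open_ext (fun x => exists U, (open T U /\ forall y, U y -> ~ A y) /\ U x)).
  - apply open_union. intros U [H _]; auto.
  - intro x. split.
    + intros [U [[HU HA] Hx]] Hcl. destruct (Hcl U HU Hx) as [y [Hy Ay]]. apply (HA y); auto.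
    + intro Hn. unfold closure in Hn. apply not_all_ex_not in Hn. destruct Hn as [U HU].
      apply imply_to_and in HU; destruct HU as [HU HU'].
      apply imply_to_and in HU'; destruct HU' as [Hx HU'].
      exists U. split; auto. split; auto. intros y Hy Ay. apply HU'; eauto.
Qed.

Lemma piece (K : Type) (x0 : X) (e : nat -> K)
  (pk : K -> K -> K) (Hpk : forall a b c d, pk a b = pk c d -> a = c /\ b = d)
  (He : forall m n, e m = e n -> m = n)
  (unc : ~ card_le (fun _ : K => True) nat)
  (Hexp : omega1_expandable T) (A : X -> Prop) (fA : X -> K) (HfA : inj_on A fA)
  (Ck : X -> Prop) (HCk : closed_discrete T Ck) :
  exists phi : X -> K, inj_on (fun x => Ck x /\ closure T A x) phi.
Proof.
  set (D := fun x => Ck x /\ closure T A x).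
  assert (HD : closed_discrete T D).
  { destruct HCk as [Hcl Hd]. split.
    - unfold closed.
      apply (open_ext (fun x => exists U, (U = (fun x => ~ Ck x) \/ U = (fun x => ~ closure T A x)) /\ U x)).
      + apply open_union. intros U [->| ->]; [exact Hcl | apply closure_compl_open].
      + intro x. split.
        * intros [U [[->| ->] H]]; unfold D; tauto.
        * intro H. unfold D in H. apply not_and_or in H. destruct H as [H|H]; [exists (fun x1 => ~ Ck x1) | exists (fun x1 => ~ closure T A x1)]; auto.
    - intros x [Hx1 Hx2]. destruct (Hd x Hx1) as [U [HU HUx]]. exists U. split; auto.
      intro y; split.
      + intros [H1 [H2 _]]. apply HUx; auto.
      + intros ->. split; [apply (proj2 (HUx x)); auto | split; auto]. }
  destruct (Hexp D HD) as [U [HU1 HU2]].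
  destruct (choose_fun (fun d a => D d -> A a /\ U d a)) as [ad Had].
  { intro d. destruct (classic (D d)) as [Hd|Hd].
    - destruct (HU1 d Hd) as [Ho Hi].
      assert (Hdd : U d d) by (apply (proj2 (Hi d)); auto).
      destruct (proj2 Hd (U d) Ho Hdd) as [y [Hy Ay]]. exists y; auto.
    - exists x0; intro; contradiction. }
  destruct (choose_fun (fun a (psi : X -> K) => inj_on (fun d => D d /\ U d a) psi)) as [psi Hpsi].
  { intro a. apply (aleph1_inj X K x0 e pk Hpk He unc). apply HU2. }
  exists (fun d => pk (fA (ad d)) (psi (ad d) d)).
  intros d d' Hd Hd' E. apply Hpk in E. destruct E as [E1 E2].
  destruct (Had d Hd) as [A1 U1]. destruct (Had d' Hd') as [A2 U2].
  apply HfA in E1; auto. rewrite <- E1 in E2, U2.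
  apply (Hpsi (ad d)); auto.
Qed.
End Topo.

Theorem mainTheorem5 (K : Type) (HK : infinite_type K)
  (X : Type) (T : topology X)
  (Hhaus : hausdorff T) (Hcrowd : crowded T) (Hbaire : baire T)
  (Hexp : omega1_expandable T) (Hdis : dis_star_le T K)
  (A : X -> Prop) (HA : card_le A K) :
  card_le (closure T A) K.
Proof.
  destruct HK as [e He].
  destruct (sq K e He) as [pk Hpk].
  destruct (classic (exists x : X, True)) as [[x0 _]|Hn].
  2:{ exists (fun _ => e 0). intros x; exfalso; apply Hn; eauto. }
  assert (unc := uncount X T K x0 Hcrowd Hbaire Hdis).
  destruct HA as [fA HfA].
  destruct Hdis as [C [HC Hcov]].
  destruct (choose_fun (fun k (phi : X -> K) => inj_on (fun x => C k x /\ closure T A x) phi))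
    as [phi Hphi].
  { intro k. apply (piece X T K x0 e pk Hpk He unc Hexp A fA HfA (C k) (HC k)). }
  destruct (choose_fun (fun x k => C k x) Hcov) as [kx Hkx].
  exists (fun x => pk (kx x) (phi (kx x) x)).
  intros x y Hx Hy E. apply Hpk in E. destruct E as [E1 E2].
  rewrite <- E1 in E2. apply (Hphi (kx x)); auto. split; auto. rewrite E1; auto.
Qed.
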